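(* Let $A$ be an $n\times n$ generalized tournament matrix and let $X$ be a clan of $A$. Then $\mathrm{Inv}(A,X)$ has the same principal minors as $A$, i.e. $\det \mathrm{Inv}(A,X)[Y]=\det A[Y]$ for every nonempty $Y\subseteq[n]$.
   Context: A generalized tournament matrix of order $n$ is a real $n\times n$ matrix $M=(m_{ij})$ with nonnegative entries satisfying $M+M^{t}=J_n-I_n$. Write $[n]=\{1,\ldots,n\}$; $M[Y]$ is the principal submatrix indexed by $Y$. A clan of $M$ is a subset $X\subseteq[n]$ such that for all $i,j\in X$ and $k\in[n]\setminus X$, $m_{ik}=m_{jk}$ and $m_{ki}=m_{kj}$. For $X\subseteq[n]$, $\mathrm{Inv}(M,X)$ is the matrix obtained from $M$ by replacing $m_{ij}$ by $m_{ji}$ for all $i,j\in X$. *)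

(* Defs.v *)
From HB Require Import structures.
From mathcomp Require Import all_boot all_order all_algebra.
From mathcomp Require Import reals.
Set Implicit Arguments. Unset Strict Implicit. Unset Printing Implicit Defensive.
Import Order.TTheory GRing.Theory Num.Theory.
Local Open Scope ring_scope.

Definition gen_tournament (R : realType) (n : nat) (M : 'M[R]_n) : Prop :=
  (forall i j, 0 <= M i j) /\
  (forall i j, M i j + M j i = (if i == j then 0 else 1)).

Definition clan (R : realType) (n : nat) (M : 'M[R]_n) (X : {set 'I_n}) : Prop :=
  forall i j k, i \in X -> j \in X -> k \notin X ->
    M i k = M j k /\ M k i = M k j.

Definition Inv (R : realType) (n : nat) (M : 'M[R]_n) (X : {set 'I_n}) : 'M[R]_n :=
  \matrix_(i, j) (if (i \in X) && (j \in X) then M j i else M i j).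

(* Principal submatrix M[Y], rows/columns indexed by Y in increasing order. *)
Definition principal_submx (R : realType) (n : nat) (M : 'M[R]_n) (Y : {set 'I_n})
  : 'M[R]_#|Y| :=
  \matrix_(i, j) M (enum_val i) (enum_val j).

(* Main.v *)
From HB Require Import structures.
From mathcomp Require Import all_boot all_order all_algebra.
From mathcomp Require Import fingroup perm.
From mathcomp Require Import reals.
From mathcomp Require Import ring.
Require Import Defs.
Import Order.TTheory GRing.Theory Num.Theory.
Set Implicit Arguments. Unset Strict Implicit. Unset Printing Implicit Defensive.
Local Open Scope ring_scope.

Lemma det_unip (R : idomainType) n (L : 'M[R]_n) (S : {set 'I_n}) :
  (forall i, L i i = 1) ->
  (forall i j, i != j -> (i \in S) || (j \notin S) -> L i j = 0) ->
  \det L = 1.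
Proof.
move=> Ld Lo; rewrite /determinant (bigD1 (1%g : 'S_n)) //=.
rewrite odd_perm1 expr0 mul1r big1; last by move=> i _; rewrite perm1 Ld.
rewrite big1 ?addr0 //.
move=> s s1; apply/eqP; rewrite mulf_eq0; apply/orP; right.
apply/prodf_eq0; suff /existsP [i Hi] : [exists i, L i (s i) == 0] by exists i.
apply: contraR s1 => /existsPn H.
have nz : forall i, L i (s i) != 0 by move=> i; have := H i.
have fixS : forall i, i \in S -> s i = i.
  move=> i iS; apply/eqP; apply: contraR (nz i) => ne.
  by apply/eqP; apply: Lo; rewrite 1?eq_sym // iS.
apply/eqP/permP => i; rewrite perm1.
case: (boolP (i \in S)) => iS; first exact: fixS.
case: (boolP (s i \in S)) => siS.
  have := fixS _ siS => /perm_inj E; by rewrite E in siS; rewrite siS in iS.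
apply/eqP; apply: contraR (nz i) => ne.
by apply/eqP; apply: Lo; rewrite 1?eq_sym // siS orbT.
Qed.

Definition fill (R : idomainType) n (S : {set 'I_n}) (M : 'M[R]_n) : 'M[R]_n :=
  \matrix_(i, j) if (i \in S) && (j \in S) then M i j else (i == j)%:R.
Definition rowfill (R : idomainType) n (S : {set 'I_n}) (M : 'M[R]_n) : 'M[R]_n :=
  \matrix_(i, j) if i \in S then (i == j)%:R else M i j.
Definition pattern (R : idomainType) n (S : {set 'I_n}) (M : 'M[R]_n) :=
  forall i j, i \in S -> j \notin S -> M i j = 0.

Lemma fill_fact (R : idomainType) n (S : {set 'I_n}) (M : 'M[R]_n) :
  pattern S M -> M = fill S M *m rowfill S M.
Proof.
move=> P; apply/matrixP => i j; rewrite !mxE.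
case: (boolP (i \in S)) => iS.
  rewrite (bigD1 j) //= big1 ?addr0.
    rewrite !mxE iS /=; case: (boolP (j \in S)) => jS; first by rewrite eqxx mulr1.
    have ij : (i == j) = false by apply/negbTE; apply: contraNneq jS => <-.
    by rewrite ij mul0r P.
  move=> k kj; rewrite !mxE iS /=; case: (boolP (k \in S)) => kS.
    by rewrite (negbTE kj) mulr0.
  have ik : (i == k) = false by apply/negbTE; apply: contraNneq kS => <-.
  by rewrite ik mul0r.
rewrite (bigD1 i) //= big1 ?addr0.
  by rewrite !mxE (negbTE iS) /= eqxx mul1r.
move=> k ki; rewrite !mxE (negbTE iS) /= eq_sym (negbTE ki) mul0r //.
Qed.

Lemma det_block (R : idomainType) n (S : {set 'I_n}) (M : 'M[R]_n) :
  pattern S M -> \det M = \det (fill S M) * \det (fill (~: S) M).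
Proof.
move=> P; rewrite {1}(fill_fact P) det_mulmx; congr (_ * _).
rewrite -det_tr.
have P' : pattern (~: S) (rowfill S M)^T.
  move=> i j; rewrite !inE negbK => iS jS; rewrite !mxE jS.
  have /negbTE -> // : j != i by apply/negP => /eqP E; move: iS; rewrite -E jS.
rewrite {1}(fill_fact P') det_mulmx.
have -> : fill (~: S) (rowfill S M)^T = (fill (~: S) M)^T.
  by apply/matrixP => i j; rewrite !mxE !inE; case: (j \in S); case: (i \in S) => //=; rewrite eq_sym.
rewrite det_tr (@det_unip _ _ (rowfill (~: S) (rowfill S M)^T) (~: S)) ?mulr1 //.
  by move=> i; rewrite !mxE !inE; case: (i \in S); rewrite /= eqxx.
move=> i j ij; rewrite !mxE !inE negbK => H.
case: (boolP (i \in S)) H => iS /= H; last by rewrite (negbTE ij).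
by rewrite H eq_sym (negbTE ij).
Qed.

Definition zr (R : realType) n (M : 'M[R]_n) (e : 'I_n) (S : {set 'I_n}) : 'M[R]_n :=
  \matrix_(i, j) if (i == e) && (j \in S) then 0 else M i j.

Lemma det_split (R : realType) n (M : 'M[R]_n) e (S : {set 'I_n}) :
  \det M = \det (zr M e (~: S)) + \det (zr M e S).
Proof.
rewrite -[\det (zr M e _)]mul1r -[\det (zr M e S)]mul1r.
apply: (@determinant_multilinear _ _ _ _ _ e).
- apply/rowP => j; rewrite !mxE eqxx !inE /= !mul1r.
  by case: (j \in S); rewrite /= ?addr0 ?add0r.
- by apply/matrixP => i j; rewrite !mxE eq_sym (negbTE (neq_lift _ _)).
- by apply/matrixP => i j; rewrite !mxE eq_sym (negbTE (neq_lift _ _)).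
Qed.

Lemma det0row (R : realType) n (M : 'M[R]_n) e :
  (forall j, M e j = 0) -> \det M = 0.
Proof. by move=> H; rewrite (expand_det_row _ e) big1 // => j _; rewrite H mul0r. Qed.

Ltac simp_eq := repeat match goal with
 | H : is_true (?a != ?b) |- context [?a == ?b] => rewrite (negbTE H)
 | H : is_true (?a != ?b) |- context [?b == ?a] => rewrite [b == a]eq_sym (negbTE H)
 | H : is_true (?a \in ?S) |- context [?a \in ?S] => rewrite H
 | H : is_true (?a \notin ?S) |- context [?a \in ?S] => rewrite (negbTE H)
 end.

Ltac contra_tac := match goal with
 | H1 : is_true (?a \in ?S), H2 : is_true (?a \notin ?S) |- _ => by rewrite H1 in H2
 | H : is_true (?a != ?a) |- _ => by rewrite eqxx in H
 end.

Ltac mc i j e X := case: (eqVneq i e) => [?|?]; try subst i;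
  case: (eqVneq j e) => [?|?]; try subst j;
  try (case: (boolP (i \in X)) => ?); try (case: (boolP (j \in X)) => ?);
  try contra_tac; simp_eq; rewrite /= ?eqxx //=; try by rewrite eq_sym.

Ltac mc1 j e X := case: (eqVneq j e) => [?|?]; try subst j;
  try (case: (boolP (j \in X)) => ?);
  try contra_tac; simp_eq; rewrite /= ?eqxx //=; try by rewrite eq_sym.

Ltac fin Hp i j := try (move=> _); try (move=> _);
  try (by case: (Hp i j)); try (by case: (Hp j i)).

Lemma key (R : realType) n (N : 'M[R]_n) (X : {set 'I_n}) e :
  e \in X ->
  (forall i z, i \in X -> i != e -> z \notin X -> N i z = 0 /\ N z i = 0) ->
  \det (Inv N X) = \det N.
Proof.
move=> eX Hp.
rewrite (det_split N e X) (det_split (Inv N X) e X); congr (_ + _).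
  have P1 : pattern X (zr N e (~: X)).
    by move=> i j iX jX; rewrite !mxE !inE; mc i j e X; case: (Hp i j).
  have P2 : pattern X (zr (Inv N X) e (~: X)).
    by move=> i j iX jX; rewrite !mxE !inE; mc i j e X; case: (Hp i j).
  rewrite (det_block P1) (det_block P2) -[\det (fill X (zr N e _))]det_tr.
  by congr (_ * _); congr (\det _); apply/matrixP => i j; rewrite !mxE !inE; mc i j e X.
rewrite -det_tr -[\det (zr N e X)]det_tr.
rewrite (det_split (zr (Inv N X) e X)^T e X) (det_split (zr N e X)^T e X).
have Z : forall M : 'M[R]_n, pattern (X :\ e) M ->
    (forall j, fill (~: (X :\ e)) M e j = 0) -> \det M = 0.
  by move=> M PM H; rewrite (det_block PM) (det0row H) mulr0.
congr (_ + _).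
  rewrite !Z //.
  - by move=> i j; rewrite !mxE !inE; mc i j e X; fin Hp i j.
  - by move=> j; rewrite !mxE !inE; mc1 j e X.
  - by move=> i j; rewrite !mxE !inE; mc i j e X; fin Hp i j.
  - by move=> j; rewrite !mxE !inE; mc1 j e X.
have P1 : pattern (X :\ e) (zr (zr N e X)^T e X).
  by move=> i j; rewrite !mxE !inE; mc i j e X; fin Hp i j.
have P2 : pattern (X :\ e) (zr (zr (Inv N X) e X)^T e X).
  by move=> i j; rewrite !mxE !inE; mc i j e X; fin Hp i j.
rewrite (det_block P1) (det_block P2) -[\det (fill (X :\ e) (zr (zr N e X)^T e X))]det_tr.
congr (_ * _); congr (\det _); apply/matrixP => i j; rewrite !mxE !inE; mc i j e X.
Qed.

Definition aX (R : realType) n (X : {set 'I_n}) (e i : 'I_n) : R :=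
  if (i \in X) && (i != e) then 1 else 0.
Definition Pm (R : realType) n (X : {set 'I_n}) (e : 'I_n) : 'M[R]_n :=
  \matrix_(i, k) ((i == k)%:R - aX R X e i * (k == e)%:R).

Lemma Pm_mul (R : realType) n (X : {set 'I_n}) e (M : 'M[R]_n) i j :
  (Pm R X e *m M) i j = M i j - aX R X e i * M e j.
Proof.
rewrite !mxE; under eq_bigr do rewrite mxE mulrBl; rewrite sumrB.
congr (_ - _).
  rewrite (bigD1 i) //= eqxx mul1r big1 ?addr0 // => k ki.
  by rewrite eq_sym (negbTE ki) mul0r.
rewrite (bigD1 e) //= eqxx mulr1 big1 ?addr0 // => k ke.
by rewrite (negbTE ke) mulr0 mul0r.
Qed.

Lemma det_Pm (R : realType) n (X : {set 'I_n}) e : \det (Pm R X e) = 1.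
Proof.
apply: (@det_unip _ _ _ [set e]).
  move=> i; rewrite !mxE eqxx /aX; case: (eqVneq i e) => [->|ie].
    by rewrite ?eqxx ?andbF /= ?mul0r ?subr0.
  by rewrite ?(negbTE ie) ?andbF /= ?mulr0 ?mul0r ?subr0.
move=> i j ij; rewrite !inE !mxE (negbTE ij) sub0r /aX => H.
case: (eqVneq i e) H => [->|ie] /=; first by rewrite ?eqxx ?andbF /= ?mul0r ?oppr0.
by move=> je; rewrite (negbTE je) mulr0 oppr0.
Qed.

Definition Cm (R : realType) n (X : {set 'I_n}) e (M : 'M[R]_n) : 'M[R]_n :=
  (Pm R X e *m (Pm R X e *m M)^T)^T.

Lemma Cm_E (R : realType) n (X : {set 'I_n}) e (M : 'M[R]_n) i j :
  Cm X e M i j = M i j - aX R X e i * M e j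
                 - aX R X e j * (M i e - aX R X e i * M e e).
Proof. by rewrite /Cm mxE Pm_mul [(_^T) j i]mxE [(_^T) e i]mxE !Pm_mul. Qed.

Lemma det_Cm (R : realType) n (X : {set 'I_n}) e (M : 'M[R]_n) :
  \det (Cm X e M) = \det M.
Proof. by rewrite /Cm det_tr det_mulmx det_tr det_mulmx det_Pm !mul1r. Qed.

Lemma clan_det (R : realType) n (M : 'M[R]_n) (X : {set 'I_n}) :
  clan M X -> \det (Inv M X) = \det M.
Proof.
move=> cl; case: (set_0Vmem X) => [->|[e eX]].
  by congr (\det _); apply/matrixP => i j; rewrite mxE !inE.
rewrite -(det_Cm X e (Inv M X)) -(det_Cm X e M).
have -> : Cm X e (Inv M X) = Inv (Cm X e M) X.
  by apply/matrixP => i j; rewrite [in RHS]mxE !Cm_E !mxE /aX; mc i j e X; rewrite ?mul0r ?mul1r ?subr0; ring.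
apply: (key eX) => i z iX ie zX; rewrite !Cm_E /aX iX ie (negbTE zX) /=.
have [H1 H2] := cl i e z iX eX zX.
by rewrite H1 H2 !mul0r !mul1r !subr0 !subrr.
Qed.

Set Strict Implicit. Unset Implicit Arguments.

Theorem lemma5p1 (R : realType) (n : nat) (A : 'M[R]_n) (X : {set 'I_n}) :
  gen_tournament A -> clan A X ->
  forall Y : {set 'I_n}, Y != set0 ->
    \det (principal_submx (Inv A X) Y) = \det (principal_submx A Y).
Proof.
move=> _ cl Y _.
set X2 := [set i : 'I_#|Y| | enum_val i \in X].
have -> : principal_submx (Inv A X) Y = Inv (principal_submx A Y) X2.
  by apply/matrixP => i j; rewrite !mxE !inE.
apply: clan_det => i j k; rewrite !inE => iX jX kX; rewrite !mxE.
exact: cl.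
Qed.
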